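(* Let $G$ be an undirected graph, $D\ge1$ an integer, and let $G^D$ denote the graph on $V(G)$ in which distinct vertices $u,v$ are adjacent iff $G$ contains a path of length at most $D$ between them. Let $v_1,\ldots,v_k$ be an independent set in $G^D$. Let $(s,t)$ be a pair of vertices with $(s,t)\notin E(G)$, let $G'=(V(G),E(G)\cup\{(s,t)\})$, and let $H'$ be the subgraph of $(G')^D$ induced by $\{v_1,\ldots,v_k\}$. Then there exists $i\in\{1,\ldots,k\}$ such that every edge of $H'$ (if any) is incident to $v_i$. In particular, if $G^D$ has an independent set of size $k$, then $(G')^D$ has an independent set of size $k-1$. *)

(* Defs.v *)
From mathcomp Require Import all_boot.
Set Implicit Arguments. Unset Strict Implicit. Unset Printing Implicit Defensive.

(* A finite undirected graph on vertex type T is a symmetric irreflexive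
   relation e : rel T. *)

Definition add_edge (T : eqType) (e : rel T) (s t : T) : rel T :=
  fun x y => [|| e x y, (x == s) && (y == t) | (x == t) && (y == s)].

Definition path_le (T : eqType) (e : rel T) (D : nat) (u v : T) : Prop :=
  exists p : seq T, [/\ path e u p, last u p = v, uniq (u :: p) & size p <= D].

Definition powadj (T : eqType) (e : rel T) (D : nat) (u v : T) : Prop :=
  u <> v /\ path_le e D u v.

Definition indep_pow (T : finType) (e : rel T) (D : nat) (S : {set T}) : Prop :=
  forall x y, x \in S -> y \in S -> ~ powadj e D x y.

(* Main.v *)
Require Import Defs.
From mathcomp Require Import all_boot.
From Stdlib Require Import Classical.
From mathcomp Require Import zify.

Set Implicit Arguments. Unset Strict Implicit.
Section Aux.
Variable T : finType.
Implicit Types (e : rel T).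

Definition walk e (u v : T) (k : nat) : Prop :=
  exists q : seq T, [/\ path e u q, last u q = v & size q <= k].

Lemma size_shorten (x : T) p : size (shorten x p) <= size p.
Proof.
elim: p x => [|y p IH] x //=; case: ifP => _ /=.
  by apply: leq_trans (IH x) _.
by rewrite ltnS.
Qed.

Lemma walk_pathle e u v k : walk e u v k -> Defs.path_le e k u v.
Proof.
case=> q [pq lq sq]; rewrite -lq; move: (size_shorten u q).
case: (shortenP pq) => p' pp' up' _ hs.
exists p'; split=> //.
by apply: leq_trans hs sq.
Qed.

Lemma walk_cat e u v w k1 k2 : walk e u v k1 -> walk e v w k2 -> walk e u w (k1 + k2).
Proof.
case=> q1 [p1 l1 s1] [q2 [p2 l2 s2]]; exists (q1 ++ q2); split.
- by rewrite cat_path p1 l1.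
- by rewrite last_cat l1.
- by rewrite size_cat leq_add.
Qed.

Lemma walk_rev e u v k : symmetric e -> walk e u v k -> walk e v u k.
Proof.
move=> sym [q [pq lq sq]]; exists (rev (belast u q)); split.
- rewrite -lq rev_path.
  by apply: sub_path pq => x y; rewrite sym.
- rewrite -lq.
  have: rev (u :: q) = rev (rcons (belast u q) (last u q)) by rewrite -lastI.
  by rewrite rev_rcons rev_cons => h; rewrite -[last _ (rev _)]/(last u (last u q :: rev (belast u q))) -h last_rcons.
- by rewrite size_rev size_belast.
Qed.

Lemma split_walk e s t x p :
  path (add_edge e s t) x p ->
  path e x p \/ exists a c k1 k2, [/\ a \in [:: s; t], c \in [:: s; t],
     k1 + k2 < size p, walk e x a k1 & walk e c (last x p) k2].
Proof.
elim: p x => [|z p IH] x /=; first by left.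
case/andP=> hxz /IH [pz | [a [c [k1 [k2 [ha hc hk w1 w2]]]]]].
- case exz: (e x z); first by left; rewrite pz.
  right; move: hxz; rewrite /add_edge exz /= => hxz.
  exists x, z, 0, (size p); split=> //.
  + by case/orP: hxz => /andP[/eqP -> _]; rewrite !inE eqxx ?orbT.
  + by case/orP: hxz => /andP[_ /eqP ->]; rewrite !inE eqxx ?orbT.
  + by exists [::]; split.
  + by exists p; split.
- right; case exz: (e x z).
  + exists a, c, k1.+1, k2; split=> //.
    case: w1 => q [pq lq sq]; exists (z :: q); split=> //=; first by rewrite exz.
  + move: hxz; rewrite /add_edge exz /= => hxz.
    exists x, c, 0, k2; split=> //.
    * by case/orP: hxz => /andP[/eqP -> _]; rewrite !inE eqxx ?orbT.
    * by rewrite add0n; apply: ltn_trans (leq_ltn_trans (leq_addl _ _) hk) _.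
    * by exists [::]; split.
Qed.

Definition arc e s t D (x y : T) : Prop :=
  exists k1 k2, k1 + k2 < D /\ (walk e x s k1 /\ walk e t y k2).

Lemma arc_contra e s t D (S : {set T}) x y x' y' :
  symmetric e -> indep_pow e D S ->
  x \in S -> y \in S -> x' \in S -> y' \in S -> x <> x' -> y <> y' ->
  arc e s t D x y -> arc e s t D x' y' -> False.
Proof.
move=> sym ind xS yS x'S y'S nx ny [k1 [k2 [hk [w1 w2]]]] [k1' [k2' [hk' [w1' w2']]]].
case: (leqP (k1 + k1') D) => h.
- apply: (ind x x' xS x'S); split=> //.
  apply: walk_pathle; have := walk_cat w1 (walk_rev sym w1').
  by case=> q [? ? ?]; exists q; split=> //; apply: leq_trans h.
- apply: (ind y y' yS y'S); split=> //.
  apply: walk_pathle; have := walk_cat (walk_rev sym w2) w2'.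
  by case=> q [? ? ?]; exists q; split=> //; lia.
Qed.

Lemma edge_arc e s t D (S : {set T}) x y :
  symmetric e -> indep_pow e D S -> x \in S -> y \in S ->
  powadj (add_edge e s t) D x y -> arc e s t D x y \/ arc e s t D y x.
Proof.
move=> sym ind xS yS [nxy [p [pp lp up sp]]].
case: (split_walk pp) => [pe | [a [c [k1 [k2 [ha hc hk w1 w2]]]]]].
  by exfalso; apply: (ind x y xS yS); split=> //; exists p; split.
rewrite lp in w2.
have hD : k1 + k2 < D.+1 by lia.
case: (eqVneq a c) => [ac | nac].
  exfalso; apply: (ind x y xS yS); split=> //; apply: walk_pathle.
  subst c; have := walk_cat w1 w2.
  by case=> q [? ? ?]; exists q; split=> //; lia.
have hD' : k1 + k2 < D by lia.
move: ha hc nac w1 w2; rewrite !inE => /orP[]/eqP -> /orP[]/eqP ->; rewrite ?eqxx //= => _ w1 w2.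
- by left; exists k1, k2.
- right; exists k2, k1; split; first by rewrite addnC.
  by split; apply: walk_rev.
Qed.

End Aux.

Theorem mainTheorem11 (T : finType) (e : rel T) (D : nat) (s t : T) :
  symmetric e -> irreflexive e -> 1 <= D -> ~~ e s t ->
  (forall S : {set T}, S != set0 -> indep_pow e D S ->
     exists2 vi, vi \in S &
       forall x y, x \in S -> y \in S -> powadj (add_edge e s t) D x y ->
         x = vi \/ y = vi)
  /\
  (forall k : nat, (exists S : {set T}, indep_pow e D S /\ #|S| = k) ->
     exists S' : {set T}, indep_pow (add_edge e s t) D S' /\ #|S'| = k.-1).
Proof.
move=> sym irr D1 nst.
have part1 : forall S : {set T}, S != set0 -> indep_pow e D S ->
     exists2 vi, vi \in S &
       forall x y, x \in S -> y \in S -> powadj (add_edge e s t) D x y ->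
         x = vi \/ y = vi.
  move=> S /set0Pn [v0 v0S] ind.
  case: (classic (exists x y, [/\ x \in S, y \in S & arc e s t D x y])) =>
    [[x [y [xS yS axy]]] | noarc]; last first.
    exists v0 => // u w uS wS /(edge_arc sym ind uS wS) [] h; exfalso; apply: noarc.
    + by exists u, w.
    + by exists w, u.
  case: (classic (exists x' y', [/\ x' \in S, y' \in S, x' <> x & arc e s t D x' y']))
    => [[x' [y' [x'S y'S nx' ax']]] | noother].
  -
    have hy : forall u w, u \in S -> w \in S -> arc e s t D u w -> w = y.
      move=> u w uS wS auw.
      have y'y : y' = y.
        apply: NNPP => ny; apply: (arc_contra sym ind x'S y'S xS yS nx' ny ax' axy).
      apply: NNPP => nw.
      have [ux | nux] := classic (u = x).
      + subst u y'; apply: (arc_contra sym ind xS wS x'S yS _ nw auw ax').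
        by move=> h; apply: nx'; rewrite h.
      + exact: (arc_contra sym ind uS wS xS yS nux nw auw axy).
    exists y => // u w uS wS /(edge_arc sym ind uS wS) [] h.
    + by right; apply: hy h.
    + by left; apply: hy h.
  - have hx : forall u w, u \in S -> w \in S -> arc e s t D u w -> u = x.
      move=> u w uS wS auw; apply: NNPP => nu; apply: noother; by exists u, w.
    exists x => // u w uS wS /(edge_arc sym ind uS wS) [] h.
    + by left; apply: hx h.
    + by right; apply: hx h.
split=> // k [S [ind cS]].
case: (eqVneq S set0) => [S0 | Sn0].
  exists set0; split; first by move=> x y; rewrite inE.
  by subst; rewrite cards0.
have [vi viS hv] := part1 S Sn0 ind.
exists (S :\ vi); split.
- move=> x y; rewrite !inE => /andP[nx xS] /andP[ny yS] /(hv x y xS yS) [] h.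
  + by rewrite h eqxx in nx.
  + by rewrite h eqxx in ny.
- by rewrite -cS (cardsD1 vi S) viS.
Qed.
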